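(* There is an evolutionary graph that is not isothermal but for which, for every $r>1$, the fixation probability of the weighted Moran process with fitness $r$ started from a single uniformly random initial mutant equals $\rho_{\mathrm{reg}}(r,n)=\frac{1-1/r}{1-1/r^n}$, where $n$ is the number of vertices.
   Context: An evolutionary graph is a finite vertex set $V$ together with weights $w_{uv}\ge 0$ for ordered pairs $(u,v)$ (with $w_{uv}=0$ when there is no edge $(u,v)$) such that $\sum_{v\in V}w_{uv}=1$ for every $u\in V$. The weighted Moran process with fitness $r$: initially one vertex is a mutant and the others are non-mutants; at each step a vertex $u$ is chosen with probability proportional to its fitness (mutants $r$, non-mutants $1$), then a vertex $v$ is chosen with probability $w_{uv}$, and the state of $u$ is copied to $v$. Fixation is the event that eventually all vertices are mutants. The evolutionary graph is isothermal if $\sum_{v\in V}w_{vu}=1$ for every $u\in V$. *)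

(* Defs.v *)
From HB Require Import structures.
From mathcomp Require Import all_boot all_order all_algebra.
From mathcomp Require Import all_classical all_reals.
From mathcomp Require Import topology normedtype sequences.
Set Implicit Arguments.
Unset Strict Implicit.
Unset Printing Implicit Defensive.
Import Order.TTheory GRing.Theory Num.Theory.
Local Open Scope ring_scope.

Section Moran.
Context {R : realType} {V : finType}.

Definition evolutionary_graph (w : V -> V -> R) : Prop :=
  (forall u v, 0 <= w u v) /\ (forall u, \sum_(v : V) w u v = 1).

Definition isothermal (w : V -> V -> R) : Prop :=
  forall u, \sum_(v : V) w v u = 1.

(* fitness of vertex u in state S (S = set of mutants) *)
Definition fitness (r : R) (S : {set V}) (u : V) : R :=
  if u \in S then r else 1.

Definition total_fitness (r : R) (S : {set V}) : R :=
  \sum_(u : V) fitness r S u.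

Definition moran_next (S : {set V}) (u v : V) : {set V} :=
  if u \in S then v |: S else S :\ v.

Definition moran_step (r : R) (w : V -> V -> R) (S T : {set V}) : R :=
  \sum_(u : V) \sum_(v : V)
     (if moran_next S u v == T then fitness r S u / total_fitness r S * w u v
      else 0).

Fixpoint moran_dist (r : R) (w : V -> V -> R) (x : V) (t : nat)
  : {set V} -> R :=
  match t with
  | 0 => fun T => (T == [set x])%:R
  | t'.+1 => fun T => \sum_(S : {set V}) moran_dist r w x t' S * moran_step r w S T
  end.

Definition fixation_by (r : R) (w : V -> V -> R) (t : nat) : R :=
  (#|V|%:R)^-1 * \sum_(x : V) moran_dist r w x t [set: V].

End Moran.

Definition rho_reg {R : realType} (r : R) (n : nat) : R :=
  (1 - r^-1) / (1 - r^-1 ^+ n).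

(* Main.v *)
Require Import Defs.
From HB Require Import structures.
From mathcomp Require Import all_boot all_order all_algebra.
From mathcomp Require Import all_classical all_reals.
From mathcomp Require Import topology normedtype sequences.
From mathcomp Require Import ring lra.
Import Order.TTheory GRing.Theory Num.Theory numFieldNormedType.Exports.
Local Open Scope ring_scope.

Lemma mp_step_sum (R : realType) (V : finType) (r : R) (w : V -> V -> R)
  (S : {set V}) (g : {set V} -> R) :
  \sum_T moran_step r w S T * g T =
  \sum_u \sum_v (fitness r S u / total_fitness r S * w u v) * g (moran_next S u v).
Proof.
rewrite /moran_step.
under eq_bigr => T _ do rewrite big_distrl /=.
rewrite exchange_big /=; apply: eq_bigr => u _.
under eq_bigr => T _ do rewrite big_distrl /=.
rewrite exchange_big /=; apply: eq_bigr => v _.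
rewrite (bigD1 (moran_next S u v)) //= eqxx big1 ?addr0 // => T /negbTE.
by rewrite eq_sym => ->; rewrite mul0r.
Qed.

Lemma mp_step_ge0 (R : realType) (V : finType) (r : R) (w : V -> V -> R) S T :
  0 <= r -> (forall u v, 0 <= w u v) -> 0 <= moran_step r w S T.
Proof.
move=> r0 w0; rewrite /moran_step; apply: sumr_ge0 => u _; apply: sumr_ge0 => v _.
case: ifP => // _; apply: mulr_ge0 => //; apply: divr_ge0.
  by rewrite /fitness; case: ifP.
by apply: sumr_ge0 => i _; rewrite /fitness; case: ifP.
Qed.

Lemma mp_dist_ge0 (R : realType) (V : finType) (r : R) (w : V -> V -> R) x t T :
  0 <= r -> (forall u v, 0 <= w u v) -> 0 <= moran_dist r w x t T.
Proof.
move=> r0 w0; elim: t T => [|t IH] T /=; first by rewrite ler0n.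
by apply: sumr_ge0 => S _; apply: mulr_ge0 => //; apply: mp_step_ge0.
Qed.

Lemma mp_dist_step (R : realType) (V : finType) (r : R) (w : V -> V -> R) x t
   (g : {set V} -> R) :
  \sum_T moran_dist r w x t.+1 T * g T =
  \sum_S moran_dist r w x t S * \sum_T moran_step r w S T * g T.
Proof.
rewrite /=.
under eq_bigr => T _ do rewrite big_distrl /=.
rewrite exchange_big /=; apply: eq_bigr => S _.
rewrite big_distrr; apply: eq_bigr => T _ /=; by rewrite mulrA.
Qed.

Lemma mp_conservation (R : realType) (V : finType) (r : R) (w : V -> V -> R) x
  (h : {set V} -> R) :
  (forall S, \sum_T moran_step r w S T * h T = h S) ->
  forall t, \sum_T moran_dist r w x t T * h T = h [set x].
Proof.
move=> hh; elim=> [|t IH].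
  rewrite /= (bigD1 [set x]) //= eqxx mul1r big1 ?addr0 // => T /negbTE ->.
  by rewrite mul0r.
by rewrite mp_dist_step -IH; apply: eq_bigr => S _; rewrite hh.
Qed.

Lemma mp_contraction (R : realType) (V : finType) (r : R) (w : V -> V -> R) x
  (g : {set V} -> R) (c : R) :
  0 <= r -> (forall u v, 0 <= w u v) ->
  (forall S, \sum_T moran_step r w S T * g T <= c * g S) ->
  forall t, \sum_T moran_dist r w x t.+1 T * g T <=
            c * \sum_T moran_dist r w x t T * g T.
Proof.
move=> r0 w0 hg t; rewrite mp_dist_step big_distrr; apply: ler_sum => S _.
rewrite /= mulrCA; apply: ler_wpM2l => //; exact: mp_dist_ge0.
Qed.

Definition v0 : 'I_3 := @Ordinal 3 0 isT.
Definition v1 : 'I_3 := @Ordinal 3 1 isT.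
Definition v2 : 'I_3 := @Ordinal 3 2 isT.

Definition wv (R : realType) (u v : 'I_3) : R :=
  match nat_of_ord u, nat_of_ord v with
  | 0, 0 => 0 | 0, _ => 1/2
  | 1, 0 => 3/4 | 1, 1 => 0 | 1, _ => 1/4
  | _, 0 => 3/4 | _, 1 => 1/4 | _, _ => 0 end.

Lemma mp_sum3 (R : realType) (F : 'I_3 -> R) : \sum_(i : 'I_3) F i = F v0 + F v1 + F v2.
Proof.
rewrite (big_ord_recl 2) (big_ord_recl 1) (big_ord_recl 0) big_ord0 addr0 addrA.
by congr (_ + _ + _); congr F; apply: val_inj.
Qed.

Lemma next_mem (V : finType) (S : {set V}) u v i :
  (i \in moran_next S u v) = if u \in S then (i == v) || (i \in S) else (i != v) && (i \in S).
Proof. by rewrite /moran_next; case: ifP; rewrite !inE. Qed.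

Lemma e01 : (v0 == v1) = false. Proof. by []. Qed.
Lemma e02 : (v0 == v2) = false. Proof. by []. Qed.
Lemma e10 : (v1 == v0) = false. Proof. by []. Qed.
Lemma e12 : (v1 == v2) = false. Proof. by []. Qed.
Lemma e20 : (v2 == v0) = false. Proof. by []. Qed.
Lemma e21 : (v2 == v1) = false. Proof. by []. Qed.

Definition Dn (R : realType) (r : R) : R := 4 * (r + 1) * (r ^+ 2 + r + 1).
Arguments Dn {R}.

Definition Hf (R : realType) (r : R) (b0 b1 b2 : bool) : R :=
  match b0, b1, b2 with
  | true, true, true => 1
  | false, false, false => 0
  | true, false, false => 2 * r ^+ 2 * (2 * r + 1) / Dn r
  | false, true, false | false, false, true => r ^+ 2 * (4 * r + 5) / Dn r
  | true, true, false | true, false, true => r * (2 * r + 1) * (2 * r + 3) / Dn r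
  | false, true, true => 2 * r * (2 * r ^+ 2 + 4 * r + 3) / Dn r
  end.
Arguments Hf {R}.

Definition hS (R : realType) (r : R) (S : {set 'I_3}) : R :=
  Hf r (v0 \in S) (v1 \in S) (v2 \in S).
Arguments hS {R}.

Lemma mp_harmonic (R : realType) (r : R) (S : {set 'I_3}) : 1 < r ->
  \sum_T moran_step r (@wv R) S T * hS r T = hS r S.
Proof.
move=> r1; rewrite mp_step_sum /total_fitness !mp_sum3 /hS !next_mem.
rewrite ?e01 ?e02 ?e10 ?e12 ?e20 ?e21 !eqxx /fitness.
have D0 : Dn r != 0 by rewrite /Dn; apply: lt0r_neq0; apply: mulr_gt0; [apply: mulr_gt0|]; nra.
case E0: (v0 \in S); case E1: (v1 \in S); case E2: (v2 \in S) => /=; rewrite /wv /=.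
all: rewrite /Dn in D0 *.
all: field.
all: try done.
all: repeat (apply/andP; split).
all: apply: lt0r_neq0; nra.
Qed.

Definition Tr (R : realType) (b0 b1 b2 : bool) : R :=
  if (b0 && b1 && b2) || ~~ (b0 || b1 || b2) then 0 else 1.
Arguments Tr {R}.
Definition trS (R : realType) (S : {set 'I_3}) : R := Tr (v0 \in S) (v1 \in S) (v2 \in S).
Arguments trS {R}.

Lemma inv_le (R : realType) (a b : R) : 0 < a -> a <= b -> b^-1 <= a^-1.
Proof. by move=> a0 ab; rewrite lef_pV2 ?posrE //; apply: lt_le_trans ab. Qed.

Lemma fit_ge1 (R : realType) (r : R) (S : {set 'I_3}) u : 1 <= r -> 1 <= fitness r S u <= r.
Proof. by move=> r1; rewrite /fitness; case: ifP => _; rewrite ?lexx ?r1. Qed.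

Lemma mp_contract (R : realType) (r : R) (S : {set 'I_3}) : 1 < r ->
  \sum_T moran_step r (@wv R) S T * trS T <= (1 - (8 * (r + 2))^-1) * trS S.
Proof.
move=> r1; rewrite mp_step_sum /total_fitness !mp_sum3.
have /andP [f0 f0'] := @fit_ge1 R r S v0 (ltW r1).
have /andP [f1 f1'] := @fit_ge1 R r S v1 (ltW r1).
have /andP [f2 f2'] := @fit_ge1 R r S v2 (ltW r1).
set F := fitness r S v0 + fitness r S v1 + fitness r S v2.
have F0 : 0 < F by rewrite /F; lra.
have yF : F^-1 * F = 1 by rewrite mulVf // gt_eqF.
have hz : 2 * (8 * (r + 2))^-1 <= F^-1.
  rewrite (_ : 2 * _ = (4 * (r + 2))^-1); first by apply: inv_le => //; rewrite /F; lra.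
  by field; apply: lt0r_neq0; lra.
have z0 : 0 <= (8 * (r + 2))^-1 by rewrite invr_ge0; lra.
have y0 : 0 <= F^-1 by rewrite invr_ge0; lra.
move: hz z0 y0 yF; rewrite /F.
move: (8 * (r + 2))^-1 => z.
move: (fitness r S v0 + fitness r S v1 + fitness r S v2)^-1 => y.
rewrite /trS !next_mem.
rewrite ?e01 ?e02 ?e10 ?e12 ?e20 ?e21 !eqxx /fitness.
case E0: (v0 \in S); case E1: (v1 \in S); case E2: (v2 \in S) => /=; rewrite /wv /Tr /=.
all: move=> *; nra.
Qed.

Lemma setT3 (T : {set 'I_3}) : (T == [set: 'I_3]) = [&& v0 \in T, v1 \in T & v2 \in T].
Proof.
apply/eqP/and3P => [->|[a b c]]; first by rewrite !inE.
apply/setP => i; rewrite inE.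
case: i => [[|[|[|k]]] Hk] //.
- by rewrite (_ : Ordinal Hk = v0) //; apply: val_inj.
- by rewrite (_ : Ordinal Hk = v1) //; apply: val_inj.
- by rewrite (_ : Ordinal Hk = v2) //; apply: val_inj.
Qed.

Lemma h_split (R : realType) (r : R) (T : {set 'I_3}) :
  hS r T = (T == [set: 'I_3])%:R + trS T * hS r T.
Proof.
rewrite setT3 /hS /trS.
by case: (v0 \in T); case: (v1 \in T); case: (v2 \in T); rewrite /= /Tr /=;
  rewrite ?mul0r ?mul1r ?addr0 ?add0r.
Qed.

Lemma h_bound (R : realType) (r : R) (T : {set 'I_3}) : 1 < r -> 0 <= hS r T <= 1.
Proof.
move=> r1; have D0 : 0 < Dn r by rewrite /Dn; apply: mulr_gt0; [apply: mulr_gt0|]; nra.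
rewrite /hS.
case: (v0 \in T); case: (v1 \in T); case: (v2 \in T); rewrite /= ?ler01 ?lexx //.
all: apply/andP; split; [apply: divr_ge0; nra | rewrite ler_pdivrMr //; rewrite /Dn; nra].
Qed.

Lemma tr_bound (R : realType) (T : {set 'I_3}) : 0 <= @trS R T <= 1.
Proof. by rewrite /trS /Tr; case: ifP; rewrite ?lexx ?ler01. Qed.

Definition cc (R : realType) (r : R) : R := 1 - (8 * (r + 2))^-1.
Arguments cc {R}.

Lemma cc_bound (R : realType) (r : R) : 1 < r -> 0 <= cc r < 1.
Proof.
move=> r1; have z0 : 0 < (8 * (r + 2))^-1 by rewrite invr_gt0; lra.
have z1 : (8 * (r + 2))^-1 <= 1.
  rewrite -invr1; apply: inv_le; lra.
rewrite /cc; apply/andP; split; lra.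
Qed.

Lemma q_bound (R : realType) (r : R) x t : 1 < r ->
  \sum_T moran_dist r (@wv R) x t T * trS T <= cc r ^+ t.
Proof.
move=> r1; have r0 : 0 <= r by lra.
have w0 : forall u v, 0 <= @wv R u v.
  by move=> u v; rewrite /wv; case: (nat_of_ord u) => [|[|?]]; case: (nat_of_ord v) => [|[|?]]; lra.
have /andP [c0 c1] := @cc_bound R r r1.
elim: t => [|t IH].
  rewrite /= (bigD1 [set x]) //= eqxx mul1r big1 ?addr0 ?expr0; last first.
    by move=> T /negbTE ->; rewrite mul0r.
  by have /andP [] := @tr_bound R [set x].
apply: le_trans (@mp_contraction R _ r (@wv R) x trS (cc r) r0 w0 (fun S => @mp_contract R r S r1) t) _.
by rewrite exprS; apply: ler_wpM2l.
Qed.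

Lemma err_bound (R : realType) (r : R) x t : 1 < r ->
  `|moran_dist r (@wv R) x t [set: 'I_3] - hS r [set x]| <= cc r ^+ t.
Proof.
move=> r1; have r0 : 0 <= r by lra.
have w0 : forall u v, 0 <= @wv R u v.
  by move=> u v; rewrite /wv; case: (nat_of_ord u) => [|[|?]]; case: (nat_of_ord v) => [|[|?]]; lra.
have := @mp_conservation R _ r (@wv R) x (hS r) (fun S => @mp_harmonic R r S r1) t.
under eq_bigr => T _ do rewrite h_split mulrDr.
rewrite big_split /= (bigD1 [set: 'I_3]) //= eqxx mulr1 big1 ?add0r; last first.
  by move=> T /negbTE ->; rewrite mulr0.
move=> <-.
have Hq := @q_bound R r x t r1.
have H1 : 0 <= \sum_T moran_dist r (@wv R) x t T * (trS T * hS r T).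
  apply: sumr_ge0 => T _; apply: mulr_ge0; first exact: mp_dist_ge0.
  have /andP [] := @tr_bound R T; have /andP [] := @h_bound R r T r1.
  by move=> *; apply: mulr_ge0.
have H2 : \sum_T moran_dist r (@wv R) x t T * (trS T * hS r T) <=
          \sum_T moran_dist r (@wv R) x t T * trS T.
  apply: ler_sum => T _; apply: ler_wpM2l; first exact: mp_dist_ge0.
  have /andP [] := @tr_bound R T; have /andP [] := @h_bound R r T r1.
  by move=> *; rewrite -[X in _ <= X]mulr1; apply: ler_wpM2l.
rewrite addr0 opprD addrA subrr add0r normrN ger0_norm //; lra.
Qed.

Local Open Scope classical_set_scope.
Local Open Scope ring_scope.

Theorem proposition1p12 (R : realType) :
  exists (V : finType) (w : V -> V -> R),
    evolutionary_graph w /\ ~ isothermal w /\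
    forall r : R, 1 < r ->
      fixation_by r w t @[t --> \oo] --> rho_reg r #|V|.
Proof.
exists 'I_3, (@wv R).
have w0 : forall u v, 0 <= @wv R u v.
  by move=> u v; rewrite /wv; case: (nat_of_ord u) => [|[|?]]; case: (nat_of_ord v) => [|[|?]]; lra.
split; [split => // u|split].
  rewrite mp_sum3 /wv /=; case: u => [[|[|[|k]]] Hk] //=; lra.
  move/(_ v0); rewrite mp_sum3 /wv /=; lra.
move=> r r1.
have Hrho : rho_reg r #|'I_3| = 3^-1 * (hS r [set v0] + hS r [set v1] + hS r [set v2]).
  rewrite card_ord /rho_reg /hS !inE e01 e02 e10 e12 e20 e21 !eqxx /= /Dn.
  field; repeat (apply/andP; split); apply: lt0r_neq0; try nra.
have c01 := @cc_bound R r r1.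
have Hc : `|cc r| < 1 by case/andP: c01 => ? ?; rewrite ger0_norm.
apply/cvgrPdist_le => e e0.
have := cvg_expr Hc; move/cvgrPdist_le => /(_ e e0).
apply: filterS => t Ht.
have E0 := @err_bound R r v0 t r1.
have E1 := @err_bound R r v1 t r1.
have E2 := @err_bound R r v2 t r1.
have ge0 : 0 <= cc r ^+ t by case/andP: c01 => ? ?; apply: exprn_ge0.
move: Ht; rewrite sub0r normrN ger0_norm // => Ht.
rewrite Hrho /fixation_by card_ord mp_sum3.
move: E0 E1 E2; rewrite !ler_norml => /andP[? ?] /andP[? ?] /andP[? ?].
apply/andP; split; lra.
Qed.
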